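(* Let $\mathcal R$ be an energy relation under energy constraint $E$ (of an ETP or a finite composition of such). Then the greatest fixpoint $\nu\mathcal R^{-1}$ of the map $I\mapsto\mathcal R^{-1}(I)$ on the complete lattice $(\mathcal I(E),\supseteq)$ exists, is a closed (possibly empty) interval, and $$\nu\mathcal R^{-1}=\bigcap_{i\in\mathbb N}(\mathcal R^{-1})^i(E).$$ Moreover, $\nu\mathcal R^{-1}$ is the largest subset $S\subseteq E$ such that for every $w_0\in S$ there is $w_1\in S$ with $\mathcal R(w_0,w_1)$. In particular, if $\mathcal R$ is the energy relation of a cycle $\mathcal C$ (an ETP, or concatenation of ETPs, starting and ending at the same macro-state), then $\nu\mathcal R^{-1}$ is exactly the set of initial energy levels $w_0\in E$ from which there is an infinite run iterating $\mathcal C$ forever that satisfies $E$.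
   Context: An energy timed automaton (ETA) is a tuple $\langle S,S_0,X,\mathrm{Inv},r,T\rangle$ with finite states $S$, initial states $S_0$, clocks $X$, invariants $\mathrm{Inv}(s)$ that are conjunctions of closed clock constraints $x\bowtie c$ ($\bowtie\in\{\le,\ge,=\}$, $c$ rational), rates $r\colon S\to\mathbb Q$, and transitions $(s,g,u,z,s')$ with closed guard $g$, update $u\in\mathbb Q$, reset set $z\subseteq X$. A run alternates delays $d\ge0$ in a state $s$ (clocks increase by $d$, invariant must hold, energy increases by $d\cdot r(s)$) and transitions (guard must hold, clocks in $z$ reset to $0$, energy increases by $u$). An energy constraint is a closed interval $E$ with rational bounds; a run satisfies $E$ if all its energy levels lie in $E$. $\mathcal I(E)$ is the set of closed subintervals of $E$ (including $\emptyset$). An energy timed path (ETP) from $s_0$ to $s_n$ is an ETA whose states $s_0,\dots,s_n$ are linked by exactly one transition from $s_i$ to $s_{i+1}$ each. Its energy relation $\mathcal R^E_{\mathcal P}(w_0,w_1)$ holds iff there is a finite run from $(s_0,\mathbf 0,w_0)$ to $(s_n,\mathbf 0,w_1)$ satisfying $E$; compositions of energy relations correspond to concatenating paths, and $\mathcal R^k$ is the $k$-fold composition. For $I\in\mathcal I(E)$, $\mathcal R^{-1}(I)=\{w_0\in E\mid \exists w_1\in I.\ \mathcal R(w_0,w_1)\}$. Iterating a cycle means concatenating runs of it, each starting and ending with all clocks equal to $0$, the final energy of one being the initial energy of the next. *)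

(* Defs.v *)
From Stdlib Require Import Reals QArith Qreals List.
Import ListNotations.
Open Scope R_scope.

(** Clocks are named by natural numbers; a valuation gives every clock a
    nonnegative real value.  The clock set X of an ETP is an explicit list. *)
Definition valuation := nat -> R.

Inductive cmp := CLe | CGe | CEq.

Record constr := mkConstr { c_clock : nat; c_op : cmp; c_const : Q }.

Definition sat_atom (v : valuation) (k : constr) : Prop :=
  match c_op k with
  | CLe => v (c_clock k) <= Q2R (c_const k)
  | CGe => v (c_clock k) >= Q2R (c_const k)
  | CEq => v (c_clock k) = Q2R (c_const k)
  end.

Definition sat (v : valuation) (g : list constr) : Prop :=
  forall k, In k g -> sat_atom v k.

Definition delay (v : valuation) (d : R) : valuation := fun x => v x + d.
Definition reset (z : list nat) (v : valuation) : valuation :=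
  fun x => if in_dec Nat.eq_dec x z then 0 else v x.

Record loc := mkLoc { inv : list constr; rate : Q }.
Record edge := mkEdge { guard : list constr; upd : Q; rst : list nat }.

(** An energy timed path s_0 -> s_1 -> ... -> s_n: clock set, the first state
    s_0, and the list of pairs (transition s_i -> s_{i+1}, state s_{i+1}). *)
Record ETP := mkETP { clocks : list nat; loc0 : loc; steps : list (edge * loc) }.

Definition inE (lo hi : Q) (w : R) : Prop := Q2R lo <= w <= Q2R hi.

(** In each state one delay d >= 0 is taken (consecutive delays merge). *)
Fixpoint runFrom (lo hi : Q) (X : list nat) (l : loc) (rest : list (edge * loc))
  (v : valuation) (w w1 : R) {struct rest} : Prop :=
  exists d, 0 <= d /\
    (forall t, 0 <= t <= d ->
       sat (delay v t) (inv l) /\ inE lo hi (w + t * Q2R (rate l))) /\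
    match rest with
    | [] => (forall x, In x X -> delay v d x = 0) /\ w1 = w + d * Q2R (rate l)
    | (e, l') :: rest' =>
        let v' := delay v d in
        let w' := w + d * Q2R (rate l) in
        sat v' (guard e) /\ inE lo hi (w' + Q2R (upd e)) /\
        runFrom lo hi X l' rest' (reset (rst e) v') (w' + Q2R (upd e)) w1
    end.

Definition zeroV : valuation := fun _ => 0.

Definition etpRel (lo hi : Q) (P : ETP) (w0 w1 : R) : Prop :=
  runFrom lo hi (clocks P) (loc0 P) (steps P) zeroV w0 w1.

Definition relComp (R1 R2 : R -> R -> Prop) (w0 w2 : R) : Prop :=
  exists w1, R1 w0 w1 /\ R2 w1 w2.

Inductive isEnergyRel (lo hi : Q) : (R -> R -> Prop) -> Prop :=
| er_etp : forall P, isEnergyRel lo hi (etpRel lo hi P)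
| er_comp : forall R1 R2, isEnergyRel lo hi R1 -> isEnergyRel lo hi R2 ->
    isEnergyRel lo hi (relComp R1 R2).

Definition seteq (A B : R -> Prop) : Prop := forall x, A x <-> B x.
Definition subset (A B : R -> Prop) : Prop := forall x, A x -> B x.

Definition Eset (lo hi : Q) : R -> Prop := inE lo hi.

Definition closedSubint (lo hi : Q) (I : R -> Prop) : Prop :=
  (forall x, ~ I x) \/
  exists a b, a <= b /\ seteq I (fun x => a <= x <= b) /\
              subset (fun x => a <= x <= b) (Eset lo hi).

Definition preRel (lo hi : Q) (Rl : R -> R -> Prop) (I : R -> Prop) : R -> Prop :=
  fun w0 => inE lo hi w0 /\ exists w1, I w1 /\ Rl w0 w1.

Fixpoint preIter (lo hi : Q) (Rl : R -> R -> Prop) (i : nat) : R -> Prop :=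
  match i with
  | O => Eset lo hi
  | S j => preRel lo hi Rl (preIter lo hi Rl j)
  end.

(** initial energies from which the cycle can be iterated forever within E:
    an infinite chain of runs, each from clocks 0 to clocks 0, energies glued *)
Definition iterForever (Rl : R -> R -> Prop) (w0 : R) : Prop :=
  exists w : nat -> R, w O = w0 /\ forall i, Rl (w i) (w (S i)).

(* Main.v *)
Require Import Defs.
From Stdlib Require Import Reals QArith Qreals List Lra Psatz ClassicalEpsilon Classical.
Import ListNotations.
Open Scope R_scope.


Definition env := nat -> R.
Definition form := (list (nat * R) * R)%type.
Fixpoint tsum (l : list (nat * R)) (e : env) : R :=
  match l with [] => 0 | (i, c) :: l' => c * e i + tsum l' e end.
Definition eval (f : form) (e : env) : R := tsum (fst f) e + snd f.

Definition fadd (f g : form) : form := (fst f ++ fst g, snd f + snd g).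
Definition fscale (a : R) (f : form) : form :=
  (map (fun p => (fst p, a * snd p)) (fst f), a * snd f).

Lemma tsum_app l1 l2 e : tsum (l1 ++ l2) e = tsum l1 e + tsum l2 e.
Proof. induction l1 as [|[i c] l IH]; simpl; [ring| rewrite IH; ring]. Qed.
Lemma tsum_scale a l e : tsum (map (fun p => (fst p, a * snd p)) l) e = a * tsum l e.
Proof. induction l as [|[i c] l IH]; simpl; [ring| rewrite IH; ring]. Qed.
Lemma eval_fadd f g e : eval (fadd f g) e = eval f e + eval g e.
Proof. unfold eval, fadd; simpl; rewrite tsum_app; ring. Qed.
Lemma eval_fscale a f e : eval (fscale a f) e = a * eval f e.
Proof. unfold eval, fscale; simpl; rewrite tsum_scale; ring. Qed.

Definition isLin (h : env -> R) := exists f : form, forall e, h e = eval f e.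

Lemma isLin_const c : isLin (fun _ => c).
Proof. exists ([], c); intros; unfold eval; simpl; ring. Qed.
Lemma isLin_var i : isLin (fun e => e i).
Proof. exists ([(i,1)], 0); intros; unfold eval; simpl; ring. Qed.
Lemma isLin_add h1 h2 : isLin h1 -> isLin h2 -> isLin (fun e => h1 e + h2 e).
Proof. intros [f1 H1] [f2 H2]; exists (fadd f1 f2); intros; rewrite eval_fadd, H1, H2; ring. Qed.
Lemma isLin_scale a h : isLin h -> isLin (fun e => a * h e).
Proof. intros [f H]; exists (fscale a f); intros; rewrite eval_fscale, H; ring. Qed.
Lemma isLin_mulr h a : isLin h -> isLin (fun e => h e * a).
Proof. intros [f H]; exists (fscale a f); intros; rewrite eval_fscale, H; ring. Qed.
Lemma isLin_sub h1 h2 : isLin h1 -> isLin h2 -> isLin (fun e => h1 e - h2 e).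
Proof. intros H1 H2. destruct (isLin_add _ _ H1 (isLin_scale (-1) _ H2)) as [f Hf].
  exists f; intros; rewrite <- Hf; ring. Qed.

Definition polyP (P : env -> Prop) :=
  exists L : list form, forall e, P e <-> (forall f, In f L -> eval f e <= 0).

Lemma polyP_ext P Q : (forall e, P e <-> Q e) -> polyP P -> polyP Q.
Proof. intros H [L HL]; exists L; intros e; rewrite <- H; apply HL. Qed.
Lemma polyP_true : polyP (fun _ => True).
Proof. exists []; intros; simpl; split; tauto. Qed.
Lemma polyP_and P Q : polyP P -> polyP Q -> polyP (fun e => P e /\ Q e).
Proof. intros [L1 H1] [L2 H2]; exists (L1 ++ L2); intros e; rewrite H1, H2.
  split. intros [A B] f Hf; apply in_app_or in Hf; destruct Hf; auto.
  intros A; split; intros; apply A; apply in_or_app; auto. Qed.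
Lemma polyP_le h1 h2 : isLin h1 -> isLin h2 -> polyP (fun e => h1 e <= h2 e).
Proof. intros H1 H2; destruct (isLin_sub _ _ H1 H2) as [f Hf]; exists [f]; intros e.
  split. intros A g [<-|[]]; rewrite <- Hf; lra.
  intros A; specialize (A f (or_introl eq_refl)); rewrite <- Hf in A; lra. Qed.
Lemma polyP_eq h1 h2 : isLin h1 -> isLin h2 -> polyP (fun e => h1 e = h2 e).
Proof. intros H1 H2; eapply polyP_ext; [|apply polyP_and; [apply (polyP_le _ _ H1 H2)|apply (polyP_le _ _ H2 H1)]].
  intros e; simpl; split; [intros [];lra|intros ->; lra]. Qed.
Lemma polyP_forall_list {A} (l : list A) (F : A -> env -> Prop) :
  (forall a, polyP (F a)) -> polyP (fun e => forall a, In a l -> F a e).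
Proof. intros H; induction l as [|a l IH].
  - eapply polyP_ext; [|apply polyP_true]; intros; simpl; split; tauto.
  - eapply polyP_ext; [|apply (polyP_and _ _ (H a) IH)]; intros e; simpl; split.
    + intros [B C] x [<-|Hx]; auto.
    + intros B; split; auto.
Qed.

Lemma isLin_tsum_subst (s : env -> env) : (forall k, isLin (fun e => s e k)) ->
  forall l, isLin (fun e => tsum l (s e)).
Proof. intros Hs l; induction l as [|[i c] l IH]; simpl.
  apply isLin_const. apply isLin_add; auto. apply isLin_scale; auto. Qed.

Lemma polyP_subst (s : env -> env) P : (forall k, isLin (fun e => s e k)) ->
  polyP P -> polyP (fun e => P (s e)).
Proof. intros Hs [L HL].
  assert (HG : forall f, isLin (fun e => eval f (s e))).
  { intros f; unfold eval; apply isLin_add; [apply isLin_tsum_subst; auto|apply isLin_const]. }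
  set (G := fun f => proj1_sig (constructive_indefinite_description _ (HG f))).
  assert (HGe : forall f e, eval f (s e) = eval (G f) e).
  { intros f e; unfold G; destruct (constructive_indefinite_description _ _) as [g Hg]; simpl; auto. }
  exists (map G L); intros e; rewrite HL; split.
  - intros A g Hg; apply in_map_iff in Hg; destruct Hg as [f [<- Hf]]; rewrite <- HGe; auto.
  - intros A f Hf; rewrite HGe; apply A; apply in_map; auto.
Qed.

Definition scons (d : R) (e : env) : env := fun k => match k with O => d | S k => e k end.

Fixpoint coefl (l : list (nat * R)) : R :=
  match l with [] => 0 | (i, c) :: l' => (match i with O => c | _ => 0 end) + coefl l' end.
Fixpoint shl (l : list (nat * R)) : list (nat * R) :=
  match l with [] => [] | (i, c) :: l' => match i with O => shl l' | S j => (j, c) :: shl l' end end.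
Lemma tsum_scons l d e : tsum l (scons d e) = coefl l * d + tsum (shl l) e.
Proof. induction l as [|[i c] l IH]; simpl; [ring|]. destruct i; simpl; rewrite IH; ring. Qed.
Definition coef (f : form) := coefl (fst f).
Definition restf (f : form) : form := (shl (fst f), snd f).
Lemma eval_scons f d e : eval f (scons d e) = coef f * d + eval (restf f) e.
Proof. unfold eval, coef, restf; simpl; rewrite tsum_scons; ring. Qed.

Lemma sep_lemma (ls us : list R) : (forall l u, In l ls -> In u us -> l <= u) ->
  exists d, (forall l, In l ls -> l <= d) /\ (forall u, In u us -> d <= u).
Proof. induction ls as [|l ls IH]; intros H.
  - assert (exists d, forall u, In u us -> d <= u) as [d Hd].
    { clear H; induction us as [|u us IHu]. exists 0; simpl; tauto.
      destruct IHu as [d Hd]. exists (Rmin u d); intros x [<-|Hx]. apply Rmin_l.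
      eapply Rle_trans; [apply Rmin_r| auto]. }
    exists d; split; simpl; tauto.
  - destruct IH as [d [Hd1 Hd2]]. intros; apply H; simpl; auto.
    exists (Rmax l d); split.
    + intros x [<-|Hx]. apply Rmax_l. eapply Rle_trans; [apply Hd1; auto| apply Rmax_r].
    + intros u Hu; apply Rmax_lub; auto. apply H; simpl; auto.
Qed.

Definition isPos (f : form) : bool := if Rlt_dec 0 (coef f) then true else false.
Definition isNeg (f : form) : bool := if Rlt_dec (coef f) 0 then true else false.
Definition isZer (f : form) : bool := negb (isPos f) && negb (isNeg f).
Definition comb (p n : form) : form := fadd (fscale (coef p) (restf n)) (fscale (- coef n) (restf p)).

Lemma div_le A B x y : 0 < A -> 0 < B -> A * x + B * y <= 0 -> x / B <= - y / A.
Proof. intros HA HB H.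
  unfold Rdiv. pose proof (Rinv_0_lt_compat A HA). pose proof (Rinv_0_lt_compat B HB).
  assert (HAi : A * / A = 1) by (field; lra). assert (HBi : B * / B = 1) by (field; lra).
  assert (H2 : 0 <= / A * / B * (- (A * x + B * y))) by (apply Rmult_le_pos; [nra|lra]).
  replace (/ A * / B * (- (A * x + B * y))) with (- y * / A - x * / B) in H2 by (field; lra).
  lra. Qed.

Lemma polyP_ex P : polyP P -> polyP (fun e => exists d, P (scons d e)).
Proof. intros [L HL].
  exists (map restf (filter isZer L) ++
          flat_map (fun p => map (fun n => comb p n) (filter isNeg L)) (filter isPos L)).
  intros e; split.
  - intros [d Hd]; rewrite HL in Hd. intros g Hg; apply in_app_or in Hg; destruct Hg as [Hg|Hg].
    + apply in_map_iff in Hg; destruct Hg as [f [<- Hf]]; apply filter_In in Hf; destruct Hf as [Hf Hz].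
      specialize (Hd f Hf); rewrite eval_scons in Hd. unfold isZer, isPos, isNeg in Hz.
      destruct (Rlt_dec 0 (coef f)), (Rlt_dec (coef f) 0); simpl in Hz; try discriminate.
      assert (coef f = 0) by lra. rewrite H in Hd; lra.
    + apply in_flat_map in Hg; destruct Hg as [p [Hp Hg]]; apply in_map_iff in Hg;
      destruct Hg as [n [<- Hn]]; apply filter_In in Hp; apply filter_In in Hn.
      destruct Hp as [Hp Pp], Hn as [Hn Nn]. unfold isPos in Pp; unfold isNeg in Nn.
      destruct (Rlt_dec 0 (coef p)); try discriminate. destruct (Rlt_dec (coef n) 0); try discriminate.
      pose proof (Hd p Hp) as A; pose proof (Hd n Hn) as B. rewrite eval_scons in A, B.
      unfold comb; rewrite eval_fadd, !eval_fscale. nra.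
  - intros H.
    destruct (sep_lemma (map (fun n => eval (restf n) e / (- coef n)) (filter isNeg L))
                        (map (fun p => - eval (restf p) e / coef p) (filter isPos L))) as [d [Hd1 Hd2]].
    { intros l u Hl Hu. apply in_map_iff in Hl; destruct Hl as [n [<- Hn]].
      apply in_map_iff in Hu; destruct Hu as [p [<- Hp]].
      assert (Hc : In (comb p n) (flat_map (fun p => map (fun n => comb p n) (filter isNeg L)) (filter isPos L))).
      { apply in_flat_map; exists p; split; auto; apply in_map; auto. }
      assert (Hc' := H _ (in_or_app _ _ _ (or_intror Hc))). unfold comb in Hc'; rewrite eval_fadd, !eval_fscale in Hc'.
      apply filter_In in Hp; apply filter_In in Hn. destruct Hp as [_ Pp], Hn as [_ Nn].
      unfold isPos in Pp; unfold isNeg in Nn.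
      destruct (Rlt_dec 0 (coef p)); try discriminate. destruct (Rlt_dec (coef n) 0); try discriminate.
      apply div_le; lra. }
    exists d. apply HL. intros f Hf. rewrite eval_scons.
    destruct (Rlt_dec 0 (coef f)) as [Hp|Hp]; [|destruct (Rlt_dec (coef f) 0) as [Hn|Hn]].
    + assert (Hin : In f (filter isPos L)) by (apply filter_In; split; auto; unfold isPos; destruct (Rlt_dec 0 (coef f)); tauto).
      specialize (Hd2 _ (in_map (fun p => - eval (restf p) e / coef p) _ _ Hin)).
      assert (Hq : - eval (restf f) e / coef f * coef f = - eval (restf f) e) by (field; lra). nra.
    + assert (Hin : In f (filter isNeg L)) by (apply filter_In; split; auto; unfold isNeg; destruct (Rlt_dec (coef f) 0); tauto).
      specialize (Hd1 _ (in_map (fun n => eval (restf n) e / (- coef n)) _ _ Hin)).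
      assert (Hq : eval (restf f) e / (- coef f) * (- coef f) = eval (restf f) e) by (field; lra). nra.
    + assert (Hz : coef f = 0) by lra.
      assert (Hin : In (restf f) (map restf (filter isZer L))).
      { apply in_map, filter_In; split; auto. unfold isZer, isPos, isNeg.
        destruct (Rlt_dec 0 (coef f)), (Rlt_dec (coef f) 0); try lra; reflexivity. }
      specialize (H _ (in_or_app _ _ _ (or_introl Hin))). rewrite Hz; lra.
Qed.

Ltac lin := repeat (first [apply isLin_add | apply isLin_mulr | apply isLin_var | apply isLin_const]).

Lemma polyP_inE lo hi h : isLin h -> polyP (fun e => inE lo hi (h e)).
Proof. intros H; unfold inE. apply polyP_and; apply polyP_le; auto; apply isLin_const. Qed.

Lemma polyP_sat g (val : env -> valuation) : (forall x, isLin (fun e => val e x)) ->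
  polyP (fun e => sat (val e) g).
Proof. intros H; unfold sat. apply (polyP_forall_list g (fun k e => sat_atom (val e) k)).
  intros [x op c]; unfold sat_atom; simpl. destruct op.
  - apply polyP_le; auto; apply isLin_const.
  - eapply polyP_ext; [|apply (polyP_le (fun _ => Q2R c) (fun e => val e x)); auto; apply isLin_const].
    intros e; simpl; split; intros; lra.
  - apply polyP_eq; auto; apply isLin_const.
Qed.

Lemma forall_t lo hi v g w r d : 0 <= d ->
  ((forall t, 0 <= t <= d -> sat (delay v t) g /\ inE lo hi (w + t * r)) <->
   ((sat (delay v 0) g /\ inE lo hi (w + 0 * r)) /\ (sat (delay v d) g /\ inE lo hi (w + d * r)))).
Proof. intros Hd; split.
  - intros H; split; apply H; lra.
  - intros [[A B] [C D]] t Ht; split.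
    + intros [x op c] Hk. specialize (A _ Hk); specialize (C _ Hk). unfold sat_atom, delay in *; simpl in *.
      destruct op; lra.
    + unfold inE in *. destruct (Rle_dec 0 r); split; nra.
Qed.

Lemma ext_t lo hi (D W : env -> R) (V : env -> valuation) r g (M : env -> Prop) :
 polyP (fun e => 0 <= D e /\ ((sat (delay (V e) 0) g /\ inE lo hi (W e + 0 * r)) /\
    (sat (delay (V e) (D e)) g /\ inE lo hi (W e + D e * r))) /\ M e) ->
 polyP (fun e => 0 <= D e /\ (forall t, 0 <= t <= D e -> sat (delay (V e) t) g /\ inE lo hi (W e + t * r)) /\ M e).
Proof. apply polyP_ext; intros e; split; intros [Hd [Ht M']]; split; auto; split; auto.
  - apply (forall_t lo hi _ _ _ _ _ Hd); exact Ht.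
  - apply (forall_t lo hi _ _ _ _ _ Hd) in Ht; exact Ht.
Qed.

Lemma run_poly lo hi X rest : forall l,
  polyP (fun e => runFrom lo hi X l rest (fun k => e (S (S k))) (e 0%nat) (e 1%nat)).
Proof.
  induction rest as [|[ed l'] rest IH]; intros l.
  - eapply polyP_ext; [|apply polyP_ex with (P := fun e' =>
       0 <= e' 0%nat /\
       (forall t, 0 <= t <= e' 0%nat -> sat (delay (fun k => e' (S (S (S k)))) t) (inv l) /\
                  inE lo hi (e' 1%nat + t * Q2R (rate l))) /\
       ((forall x, In x X -> delay (fun k => e' (S (S (S k)))) (e' 0%nat) x = 0) /\
        e' 2%nat = e' 1%nat + e' 0%nat * Q2R (rate l)))].
    + intros e; split; intros [d H]; exists d; exact H.
    + apply (ext_t lo hi (fun e => e 0%nat) (fun e => e 1%nat) (fun e k => e (S (S (S k))))).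
      apply polyP_and; [apply (polyP_le (fun _ => 0) (fun e => e 0%nat)); lin|
        apply polyP_and; [apply polyP_and; apply polyP_and|]].
      * apply polyP_sat; intros x; unfold delay; lin.
      * apply polyP_inE; lin.
      * apply polyP_sat; intros x; unfold delay; lin.
      * apply polyP_inE; lin.
      * apply polyP_and.
        -- apply (polyP_forall_list X (fun x e => delay (fun k => e (S (S (S k)))) (e 0%nat) x = 0)).
           intros x; apply polyP_eq; unfold delay; lin.
        -- apply polyP_eq; lin.
  - eapply polyP_ext; [|apply polyP_ex with (P := fun e' =>
       0 <= e' 0%nat /\
       (forall t, 0 <= t <= e' 0%nat -> sat (delay (fun k => e' (S (S (S k)))) t) (inv l) /\
                  inE lo hi (e' 1%nat + t * Q2R (rate l))) /\
       (sat (delay (fun k => e' (S (S (S k)))) (e' 0%nat)) (guard ed) /\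
        inE lo hi (e' 1%nat + e' 0%nat * Q2R (rate l) + Q2R (upd ed)) /\
        runFrom lo hi X l' rest (reset (rst ed) (delay (fun k => e' (S (S (S k)))) (e' 0%nat)))
          (e' 1%nat + e' 0%nat * Q2R (rate l) + Q2R (upd ed)) (e' 2%nat)))].
    + intros e; split; intros [d H]; exists d; exact H.
    + apply (ext_t lo hi (fun e => e 0%nat) (fun e => e 1%nat) (fun e k => e (S (S (S k))))).
      apply polyP_and; [apply (polyP_le (fun _ => 0) (fun e => e 0%nat)); lin|
        apply polyP_and; [apply polyP_and; apply polyP_and|]].
      * apply polyP_sat; intros x; unfold delay; lin.
      * apply polyP_inE; lin.
      * apply polyP_sat; intros x; unfold delay; lin.
      * apply polyP_inE; lin.
      * apply polyP_and; [apply polyP_sat; intros x; unfold delay; lin|].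
        apply polyP_and; [apply polyP_inE; lin|].
        apply (polyP_subst (fun e' k => match k with
              | O => e' 1%nat + e' 0%nat * Q2R (rate l) + Q2R (upd ed)
              | S O => e' 2%nat
              | S (S k) => reset (rst ed) (delay (fun k => e' (S (S (S k)))) (e' 0%nat)) k end)
              (fun e => runFrom lo hi X l' rest (fun k => e (S (S k))) (e 0%nat) (e 1%nat))).
        -- intros [|[|k]]; [lin|lin|]. unfold reset, delay.
           destruct (in_dec Nat.eq_dec k (rst ed)); lin.
        -- apply IH.
Qed.

Definition polyRel (Rl : R -> R -> Prop) := polyP (fun e => Rl (e 0%nat) (e 1%nat)).

Lemma etp_poly lo hi P : polyRel (etpRel lo hi P).
Proof.
  unfold polyRel, etpRel.
  eapply polyP_ext; [|apply (polyP_subst (fun e k => match k with O => e O | S O => e 1%nat | _ => 0 end)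
     (fun e => runFrom lo hi (clocks P) (loc0 P) (steps P) (fun k => e (S (S k))) (e 0%nat) (e 1%nat)))].
  - intros e; split; exact (fun h => h).
  - intros [|[|k]]; lin.
  - apply run_poly.
Qed.

Lemma comp_poly R1 R2 : polyRel R1 -> polyRel R2 -> polyRel (relComp R1 R2).
Proof. intros H1 H2; unfold polyRel, relComp.
  eapply polyP_ext; [|apply polyP_ex with (P := fun e' => R1 (e' 1%nat) (e' 0%nat) /\ R2 (e' 0%nat) (e' 2%nat))].
  - intros e; split; exact (fun h => h).
  - apply polyP_and.
    + apply (polyP_subst (fun e k => match k with O => e 1%nat | S O => e 0%nat | _ => 0 end) (fun e => R1 (e 0%nat) (e 1%nat))); [intros [|[|k]]; lin| exact H1].
    + apply (polyP_subst (fun e k => match k with O => e 0%nat | S O => e 2%nat | _ => 0 end) (fun e => R2 (e 0%nat) (e 1%nat))); [intros [|[|k]]; lin| exact H2].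
Qed.

Lemma energy_poly lo hi Rl : isEnergyRel lo hi Rl -> polyRel Rl.
Proof. induction 1. apply etp_poly. apply comp_poly; auto. Qed.

Lemma run_inE lo hi X rest : forall l v w w1, runFrom lo hi X l rest v w w1 -> inE lo hi w /\ inE lo hi w1.
Proof. induction rest as [|[ed l'] rest IH]; intros l v w w1 [d [Hd [Ht M]]].
  - destruct (Ht 0) as [_ A]; [lra|]. destruct (Ht d) as [_ B]; [lra|].
    replace (w + 0 * Q2R (rate l)) with w in A by ring. destruct M as [_ ->]. auto.
  - destruct (Ht 0) as [_ A]; [lra|]. replace (w + 0 * Q2R (rate l)) with w in A by ring.
    destruct M as [_ [_ M]]. apply IH in M. tauto.
Qed.

Lemma energy_inE lo hi Rl : isEnergyRel lo hi Rl -> forall w0 w1, Rl w0 w1 -> inE lo hi w0 /\ inE lo hi w1.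
Proof. induction 1; intros w0 w1 Hr.
  - apply run_inE in Hr; auto.
  - destruct Hr as [m [A B]]. apply IHisEnergyRel1 in A; apply IHisEnergyRel2 in B; tauto.
Qed.

Definition poly1 (S : R -> Prop) := polyP (fun e => S (e 0%nat)).

Fixpoint csum (l : list (nat * R)) : R := match l with [] => 0 | (_, c) :: l' => c + csum l' end.
Lemma eval_constenv f x : eval f (fun _ => x) = csum (fst f) * x + snd f.
Proof. unfold eval. destruct f as [l b]; simpl. induction l as [|[i c] l IH]; simpl; lra. Qed.

Definition lowok (a : option R) x := match a with None => True | Some a => a <= x end.
Definition hiok (b : option R) x := match b with None => True | Some b => x <= b end.
Definition minopt (b : option R) c := Some (match b with None => c | Some h => Rmin h c end).
Definition maxopt (a : option R) c := Some (match a with None => c | Some h => Rmax h c end).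
Lemma hiok_min b c x : hiok (minopt b c) x <-> hiok b x /\ x <= c.
Proof. destruct b; simpl; [|tauto]. unfold Rmin; destruct (Rle_dec r c); split; intros; try lra. Qed.
Lemma lowok_max a c x : lowok (maxopt a c) x <-> lowok a x /\ c <= x.
Proof. destruct a; simpl; [|tauto]. unfold Rmax; destruct (Rle_dec r c); split; intros; try lra. Qed.

Lemma cls (L : list (R * R)) :
  (forall x, ~ (forall p, In p L -> fst p * x + snd p <= 0)) \/
  exists a b, forall x, (forall p, In p L -> fst p * x + snd p <= 0) <-> lowok a x /\ hiok b x.
Proof.
  induction L as [|[c d] L IH].
  - right; exists None, None; simpl; split; tauto.
  - destruct IH as [IH|[a [b IH]]].
    + left; intros x H; apply (IH x); intros p Hp; apply H; simpl; auto.
    + destruct (Rlt_dec 0 c) as [Hc|Hc]; [|destruct (Rlt_dec c 0) as [Hc'|Hc']].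
      * right; exists a, (minopt b (- d / c)); intros x; rewrite hiok_min.
        assert (Hx : c * x + d <= 0 <-> x <= - d / c).
        { split; intros.
          - apply (Rmult_le_reg_l c); auto. replace (c * (- d / c)) with (- d) by (field; lra). lra.
          - apply (Rmult_le_compat_l c) in H; [|lra]. replace (c * (- d / c)) with (- d) in H by (field; lra). lra. }
        split.
        -- intros H. assert (A := H (c, d) (or_introl eq_refl)); simpl in A.
           assert (B : forall p, In p L -> fst p * x + snd p <= 0) by (intros; apply H; simpl; auto).
           apply IH in B. apply Hx in A. tauto.
        -- intros [A [B C]] p [<-|Hp]; simpl. apply Hx; auto. apply IH; auto.
      * right; exists (maxopt a (- d / c)), b; intros x; rewrite lowok_max.
        assert (Hx : c * x + d <= 0 <-> - d / c <= x).
        { split; intros.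
          - apply (Rmult_le_reg_l (- c)); [lra|]. replace (- c * (- d / c)) with d by (field; lra). lra.
          - apply (Rmult_le_compat_l (- c)) in H; [|lra]. replace (- c * (- d / c)) with d in H by (field; lra). lra. }
        split.
        -- intros H. assert (A := H (c, d) (or_introl eq_refl)); simpl in A.
           assert (B : forall p, In p L -> fst p * x + snd p <= 0) by (intros; apply H; simpl; auto).
           apply IH in B. apply Hx in A. tauto.
        -- intros [[A C] B] p [<-|Hp]; simpl. apply Hx; auto. apply IH; auto.
      * assert (c = 0) by lra; subst c. destruct (Rle_dec d 0).
        -- right; exists a, b; intros x; split.
           ++ intros H; apply IH; intros; apply H; simpl; auto.
           ++ intros H p [<-|Hp]; simpl. lra. apply IH; auto.
        -- left; intros x H. specialize (H (0, d) (or_introl eq_refl)); simpl in H; lra.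
Qed.

Lemma poly1_interval lo hi S : poly1 S -> subset S (Eset lo hi) ->
  (forall x, ~ S x) \/ exists a b, a <= b /\ forall x, S x <-> a <= x <= b.
Proof.
  intros [L HL] Hsub.
  assert (HS : forall x, S x <-> forall p, In p (map (fun f => (csum (fst f), snd f)) L) -> fst p * x + snd p <= 0).
  { intros x. rewrite (HL (fun _ => x)). split.
    - intros H p Hp. apply in_map_iff in Hp; destruct Hp as [f [<- Hf]]; simpl. rewrite <- eval_constenv; auto.
    - intros H f Hf. rewrite eval_constenv. apply (H (csum (fst f), snd f)). apply in_map_iff; exists f; auto. }
  destruct (classic (exists x, S x)) as [[x0 H0]|Hn].
  2: { left; intros x Hx; apply Hn; eauto. }
  destruct (cls (map (fun f => (csum (fst f), snd f)) L)) as [C|[a [b C]]].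
  { exfalso; apply (C x0); apply HS; auto. }
  assert (HSab : forall x, S x <-> lowok a x /\ hiok b x) by (intros; rewrite HS; apply C).
  pose proof (Hsub x0 H0) as E0. unfold Eset, inE in E0.
  destruct a as [a|].
  2: { exfalso. set (y := Rmin x0 (Q2R lo) - 1).
       assert (S y). { apply HSab. apply HSab in H0. destruct H0 as [_ Hb]. split; [exact I|].
         destruct b as [b|]; simpl in *; auto. unfold y; pose proof (Rmin_l x0 (Q2R lo)); lra. }
       apply Hsub in H. unfold Eset, inE, y in H. pose proof (Rmin_r x0 (Q2R lo)); lra. }
  destruct b as [b|].
  2: { exfalso. set (y := Rmax x0 (Q2R hi) + 1).
       assert (S y). { apply HSab. apply HSab in H0. destruct H0 as [Ha _]. split; [|exact I].
         simpl in *. unfold y; pose proof (Rmax_l x0 (Q2R hi)); lra. }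
       apply Hsub in H. unfold Eset, inE, y in H. pose proof (Rmax_r x0 (Q2R hi)); lra. }
  right; exists a, b. apply HSab in H0; simpl in H0. split; [lra|]. intros x; rewrite HSab; simpl; tauto.
Qed.

Lemma nested lo hi (J : nat -> R -> Prop) : (forall i, poly1 (J i)) -> (forall i, subset (J i) (Eset lo hi)) ->
  (forall i x, J (S i) x -> J i x) -> (forall i, exists x, J i x) ->
  exists a b, a <= b /\ forall x, (forall i, J i x) <-> a <= x <= b.
Proof.
  intros Hp Hs Hd Hne.
  assert (Hab : forall i, {p : R * R | fst p <= snd p /\ forall x, J i x <-> fst p <= x <= snd p}).
  { intros i; apply constructive_indefinite_description.
    destruct (poly1_interval lo hi (J i) (Hp i) (Hs i)) as [C|[a [b C]]].
    - exfalso; destruct (Hne i) as [x Hx]; eapply C; eauto.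
    - exists (a, b); simpl; auto. }
  set (a := fun i => fst (proj1_sig (Hab i))). set (b := fun i => snd (proj1_sig (Hab i))).
  assert (HJ : forall i x, J i x <-> a i <= x <= b i).
  { intros i x; unfold a, b; destruct (proj2_sig (Hab i)) as [_ Hp']; apply Hp'. }
  assert (Hmono : forall i k, (i <= k)%nat -> forall x, J k x -> J i x).
  { intros i k Hik; induction Hik; auto. }
  assert (Hcross : forall i j, a i <= b j).
  { intros i j. destruct (Hne (Nat.max i j)) as [y Hy].
    assert (J i y) by (apply (Hmono _ (Nat.max i j)); auto; apply Nat.le_max_l).
    assert (J j y) by (apply (Hmono _ (Nat.max i j)); auto; apply Nat.le_max_r).
    apply HJ in H; apply HJ in H0; lra. }
  destruct (completeness (fun y => exists i, y = a i)) as [al [Hal1 Hal2]].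
  { exists (b O); intros y [i ->]; auto. }
  { exists (a O); eauto. }
  assert (Halb : forall j, al <= b j) by (intros j; apply Hal2; intros y [i ->]; auto).
  destruct (completeness (fun y => exists j, y = - b j)) as [ga [Hga1 Hga2]].
  { exists (- al); intros y [j ->]; specialize (Halb j); lra. }
  { exists (- b O); eauto. }
  exists al, (- ga). split.
  - assert (ga <= - al) by (apply Hga2; intros y [j ->]; specialize (Halb j); lra). lra.
  - intros x; split.
    + intros H. split.
      * apply Hal2; intros y [i ->]; apply (proj1 (HJ i x) (H i)).
      * assert (ga <= - x) by (apply Hga2; intros y [j ->]; pose proof (proj1 (HJ j x) (H j)); lra). lra.
    + intros [A B] i; apply HJ; split.
      * assert (a i <= al) by (apply Hal1; eauto). lra.
      * assert (- b i <= ga) by (apply Hga1; eauto). lra.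
Qed.

Lemma preIter_poly lo hi Rl : polyRel Rl -> forall i, poly1 (preIter lo hi Rl i).
Proof. intros HR i; induction i as [|i IH]; simpl.
  - unfold poly1, Eset. apply polyP_inE; lin.
  - unfold poly1, preRel.
    eapply polyP_ext; [|apply polyP_and; [apply (polyP_inE lo hi (fun e => e 0%nat)); lin|
        apply polyP_ex with (P := fun e' => preIter lo hi Rl i (e' 0%nat) /\ Rl (e' 1%nat) (e' 0%nat))]].
    + intros e; split; exact (fun h => h).
    + apply polyP_and.
      * apply (polyP_subst (fun e k => e 0%nat) (fun e => preIter lo hi Rl i (e 0%nat))); [intros; lin| exact IH].
      * apply (polyP_subst (fun e k => match k with O => e 1%nat | _ => e 0%nat end) (fun e => Rl (e 0%nat) (e 1%nat)));
          [intros [|k]; lin| exact HR].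
Qed.

Lemma preIter_sub lo hi Rl i : subset (preIter lo hi Rl i) (Eset lo hi).
Proof. destruct i; simpl; intros x H; [exact H| apply H]. Qed.

Lemma preIter_dec lo hi Rl : forall i x, preIter lo hi Rl (S i) x -> preIter lo hi Rl i x.
Proof. induction i as [|i IH]; intros x H.
  - apply H.
  - destruct H as [A [w1 [B C]]]. split; auto. exists w1; split; auto.
Qed.

Theorem mainTheorem3 (lo hi : Q) (Rl : R -> R -> Prop) :
  isEnergyRel lo hi Rl ->
  exists nu : R -> Prop,
    closedSubint lo hi nu /\
    seteq (preRel lo hi Rl nu) nu /\
    (forall J, closedSubint lo hi J -> seteq (preRel lo hi Rl J) J -> subset J nu) /\
    seteq nu (fun w => forall i : nat, preIter lo hi Rl i w) /\
    (subset nu (Eset lo hi) /\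
     (forall w0, nu w0 -> exists w1, nu w1 /\ Rl w0 w1)) /\
    (forall S : R -> Prop, subset S (Eset lo hi) ->
       (forall w0, S w0 -> exists w1, S w1 /\ Rl w0 w1) -> subset S nu) /\
    seteq nu (fun w0 => Eset lo hi w0 /\ iterForever Rl w0).
Proof.
  intros HE. pose proof (energy_poly _ _ _ HE) as HP. pose proof (energy_inE _ _ _ HE) as HIn.
  set (nu := fun w => forall i : nat, preIter lo hi Rl i w).
  assert (Hsub : subset nu (Eset lo hi)) by (intros x H; apply (H O)).
  assert (Hpost : forall w0, nu w0 -> exists w1, nu w1 /\ Rl w0 w1).
  { intros w Hw.
    destruct (nested lo hi (fun i y => preIter lo hi Rl i y /\ Rl w y)) as [a [b [Hab Hint]]].
    - intros i. unfold poly1. apply polyP_and.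
      + apply preIter_poly; auto.
      + apply (polyP_subst (fun e k => match k with O => w | _ => e 0%nat end) (fun e => Rl (e 0%nat) (e 1%nat)));
          [intros [|k]; lin| exact HP].
    - intros i x [A _]; apply (preIter_sub _ _ _ _ _ A).
    - intros i x [A B]; split; auto; apply preIter_dec; auto.
    - intros i. destruct (Hw (S i)) as [_ [w1 [A B]]]. exists w1; auto.
    - exists a. assert (Ha : forall i, preIter lo hi Rl i a /\ Rl w a) by (apply Hint; lra).
      split. intros i; apply Ha. apply (Ha O). }
  assert (Hgreat : forall S : R -> Prop, subset S (Eset lo hi) ->
       (forall w0, S w0 -> exists w1, S w1 /\ Rl w0 w1) -> subset S nu).
  { intros S HS HSp x Hx i. revert x Hx. induction i as [|i IH]; intros x Hx.
    - apply HS; auto.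
    - simpl. split; [apply HS; auto|]. destruct (HSp x Hx) as [w1 [A B]]. exists w1; split; auto. }
  exists nu. split; [|split; [|split; [|split; [|split; [|split]]]]].
  -
    destruct (classic (exists i, forall x, ~ preIter lo hi Rl i x)) as [[i Hi]|Hn].
    + left. intros x Hx. apply (Hi x (Hx i)).
    + destruct (nested lo hi (preIter lo hi Rl)) as [a [b [Hab Hint]]].
      * apply preIter_poly; auto.
      * apply preIter_sub.
      * apply preIter_dec.
      * intros i. apply NNPP; intros C. apply Hn. exists i. intros x Hx. apply C; eauto.
      * right. exists a, b. split; auto. split.
        -- intros x; apply Hint.
        -- intros x Hx. apply Hsub. exact (proj2 (Hint x) Hx).
  -
    intros w; split.
    + intros [A [w1 [B C]]] i. destruct i; [exact A|]. split; auto. exists w1; split; auto.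
    + intros Hw. split; [apply (Hw O)|]. apply Hpost; auto.
  - intros J _ HJ. apply Hgreat.
    + intros x Hx. apply HJ in Hx. apply Hx.
    + intros w0 Hw0. apply HJ in Hw0. destruct Hw0 as [_ [w1 [A B]]]; eauto.
  - intros w; tauto.
  - split; auto.
  - exact Hgreat.
  - intros w; split.
    + intros Hw. split; [apply Hsub; auto|].
      assert (Hg : forall x, exists y, nu x -> nu y /\ Rl x y).
      { intros x. destruct (classic (nu x)) as [Hx|Hx].
        - destruct (Hpost x Hx) as [y Hy]; exists y; auto.
        - exists 0; tauto. }
      set (g := fun x => proj1_sig (constructive_indefinite_description _ (Hg x))).
      assert (Hgx : forall x, nu x -> nu (g x) /\ Rl x (g x)).
      { intros x; unfold g; destruct (constructive_indefinite_description _ _) as [y Hy]; simpl; auto. }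
      set (c := fun n => Nat.iter n g w).
      assert (Hc : forall n, nu (c n)).
      { induction n as [|n IH]; simpl; auto. apply Hgx; auto. }
      exists c; split; auto. intros i. apply (Hgx (c i) (Hc i)).
    + intros [A Hit]. apply (Hgreat (fun w0 => Eset lo hi w0 /\ iterForever Rl w0)); auto.
      * intros x [B _]; auto.
      * intros x [B [c [Hc0 Hc]]]. exists (c 1%nat). split.
        -- split. apply (HIn _ _ (Hc O)). exists (fun n => c (S n)); split; auto.
        -- rewrite <- Hc0; apply Hc.
Qed.
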